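(* Let $K$ be a field containing no $n$-th root of unity other than $1$. Let $A$ be a central simple algebra over $K$ of dimension $n^2$ such that every commutative subalgebra of $A$ other than $K$ is maximal (among commutative subalgebras). Then the group $\mathrm{SL}_1(A)$ is CA.
   Context: $\mathrm{SL}_1(A)$ is the group of elements of $A^\times$ of reduced norm $1$. A group is CA if the centralizer of every non-trivial element is abelian. *)

(* Defs.v *)
From HB Require Import structures.
From mathcomp Require Import all_boot all_order all_algebra all_field.
Set Implicit Arguments. Unset Strict Implicit. Unset Printing Implicit Defensive.
Import GRing.Theory.
Local Open Scope ring_scope.

Section Defs.
Variable K : fieldType.
Variable A : falgType K.

Definition is_subalg (U : {vspace A}) : Prop :=
  1 \in U /\ (U * U <= U)%VS.

Definition is_comm_subalg (U : {vspace A}) : Prop :=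
  is_subalg U /\ {in U &, forall x y, x * y = y * x}.

Definition maximal_comm_subalg (U : {vspace A}) : Prop :=
  is_comm_subalg U /\
  forall V : {vspace A}, is_comm_subalg V -> (U <= V)%VS -> V = U.

Definition central_alg : Prop := ('Z({:A}) = 1)%VS.

Definition simple_alg : Prop :=
  forall I : {vspace A}, (fullv * I <= I)%VS -> (I * fullv <= I)%VS ->
    I = 0%VS \/ I = fullv.

Definition central_simple : Prop := central_alg /\ simple_alg.

(* A splitting of A of degree n over a field extension iota : K -> L:
   a unital K-algebra homomorphism rho : A -> M_n(L) (L-linearly extended it
   gives the isomorphism A (x)_K L ~ M_n(L) when A is central simple of
   dimension n^2). *)
Definition splitting (n : nat) (L : fieldType) (iota : {rmorphism K -> L})
    (rho : A -> 'M[L]_n) : Prop :=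
  [/\ forall a b, rho (a + b) = rho a + rho b,
      forall (k : K) a, rho (k *: a) = iota k *: rho a,
      forall a b, rho (a * b) = rho a *m rho b
    & rho 1 = 1%:M].

Definition reduced_norm n (L : fieldType) (iota : {rmorphism K -> L}) (rho : A -> 'M[L]_n)
  (a : A) : L := \det (rho a).

Definition SL1 n (L : fieldType) (iota : {rmorphism K -> L}) (rho : A -> 'M[L]_n) : pred A :=
  fun a => (a \is a GRing.unit) && (reduced_norm iota rho a == 1).
End Defs.

Definition CA_group (R : ringType) (G : pred R) : Prop :=
  forall x, G x -> x != 1 ->
    forall y z, G y -> G z -> y * x = x * y -> z * x = x * z -> y * z = z * y.

(* Main.v *)
Require Import Defs.
From HB Require Import structures.
From mathcomp Require Import all_boot all_order all_algebra all_field.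
Import GRing.Theory.
Local Open Scope ring_scope.

Section Helpers.
Variables (K : fieldType) (A : falgType K).

Lemma agenv_cent (W V : {vspace A}) : (W <= 'C(V))%VS -> (agenv W <= 'C(V))%VS.
Proof.
move=> sWC; apply: agenv_sub_modl.
  by rewrite -memvE centv1.
exact: (@prodv_sub _ _ _ _ ('C(V))%AS sWC (subvv _)).
Qed.

Lemma agenv_c1 (W : {vspace A}) w : (W <= 'C[w])%VS -> (agenv W <= 'C[w])%VS.
Proof.
move=> sWC; apply: agenv_sub_modl.
  by rewrite -memvE cent1v1.
exact: (@prodv_sub _ _ _ _ ('C[w])%AS sWC (subvv _)).
Qed.

Lemma agenv_comm (W : {vspace A}) : (W <= 'C(W))%VS -> (agenv W <= 'C(agenv W))%VS.
Proof.
move=> sWC; apply: agenv_cent; rewrite centvC; exact: agenv_cent.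
Qed.

Lemma add_comm (U V : {vspace A}) :
  (U <= 'C(U))%VS -> (V <= 'C(V))%VS -> (U <= 'C(V))%VS -> (U + V <= 'C(U + V))%VS.
Proof.
move=> /centvsP cU /centvsP cV /centvsP cUV; apply/centvsP.
move=> a b /memv_addP[u1 Hu1 [v1 Hv1 ->]] /memv_addP[u2 Hu2 [v2 Hv2 ->]].
rewrite mulrDl !mulrDr mulrDl.
rewrite (cU u1 u2) // (cV v1 v2) // (cUV u1 v2) // -(cUV u2 v1) //.
by rewrite mulrDl addrACA.
Qed.

Lemma scM (i j : K) (u v : A) : (i *: u) * (j *: v) = (i * j) *: (u * v).
Proof. by rewrite -scalerAl -scalerAr scalerA. Qed.

Lemma line_comm (u v : A) : u * v = v * u -> (<[u]> <= 'C(<[v]>))%VS.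
Proof.
move=> uv; apply/centvsP => a b /vlineP[i ->] /vlineP[j ->].
by rewrite !scM uv mulrC.
Qed.

End Helpers.

Theorem proposition2p9 (K : fieldType) (n : nat) (A : falgType K)
    (L : fieldType) (iota : {rmorphism K -> L}) (rho : A -> 'M[L]_n) :
  (forall z : K, z ^+ n = 1 -> z = 1) ->
  central_simple A ->
  \dim (fullv : {vspace A}) = (n ^ 2)%N ->
  (forall U : {vspace A}, is_comm_subalg U -> U != 1%VS -> maximal_comm_subalg U) ->
  splitting iota rho ->
  CA_group (SL1 iota rho).
Proof.
move=> hroot _ _ hmax [_ rhoZ _ rho1] x /andP[_ /eqP Nx] xn1 y z _ _ yx zx.
have [/vlineP[k xk] | xK] := boolP (x \in 1%VS).
  exfalso; move: xn1; rewrite xk.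
  move: Nx; rewrite /reduced_norm xk rhoZ rho1 scalemx1 det_scalar -rmorphXn.
  move/eqP; rewrite fmorph_eq1 => /eqP /hroot ->.
  by rewrite scale1r eqxx.
pose U := agenv (1%VS + <[x]>).
have cU : (U <= 'C(U))%VS.
  apply: agenv_comm; apply: add_comm.
  - by apply: line_comm.
  - by apply: line_comm.
  - by apply: line_comm; rewrite mul1r mulr1.
have xU : x \in U by rewrite memvE; apply: subv_trans (sub_agenv _); exact: addvSr.
have U1 : 1 \in U by rewrite memvE; exact: sub1_agenv.
have commU : is_comm_subalg U.
  by split; [split; [exact: U1 | rewrite agenvM]| exact/centvsP].
have Un1 : U != 1%VS by apply: contraNneq xK => <-.
have [_ maxU] := hmax U commU Un1.
have inU : forall w, w * x = x * w -> w \in U.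
  move=> w wx.
  have wC : w \in 'C(U)%VS.
    rewrite -subv_cent1; apply: agenv_c1.
    rewrite subv_add -!memvE cent1v1 /=; apply/cent1vP; by rewrite wx.
  pose V := agenv (U + <[w]>).
  have cV : (V <= 'C(V))%VS.
    apply: agenv_comm; apply: add_comm => //.
      by apply: line_comm.
    apply/centvsP => a b aU /vlineP[j ->].
    by rewrite -scalerAl -scalerAr; move/centvP: wC => /(_ a aU) ->.
  have commV : is_comm_subalg V.
    split; [split; [|by rewrite agenvM]| exact/centvsP].
    by rewrite memvE; apply: subv_trans (sub_agenv _); apply: subv_trans (addvSl _ _); rewrite -memvE.
  have UV : (U <= V)%VS by apply: subv_trans (sub_agenv _); exact: addvSl.
  have <- := maxU V commV UV.
  by rewrite memvE; apply: subv_trans (sub_agenv _); exact: addvSr.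
by move/centvsP: cU; apply; apply: inU.
Qed.
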